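(* Let $\mathcal{N}$ be an exact category and $k\ge 1$. Regarding a binary acyclic complex supported on $[0,k]$ as one supported on $[0,k+1]$ induces a well-defined homomorphism $L_1^k(\mathcal{N})\to K_1^{k+1}(\mathcal{N})$, and the homomorphism $i_k\colon L_1^k(\mathcal{N})\to L_1^{k+1}(\mathcal{N})$ (induced by the same assignment) factors as this homomorphism followed by the canonical epimorphism $K_1^{k+1}(\mathcal{N})\twoheadrightarrow L_1^{k+1}(\mathcal{N})$.
   Context: A binary acyclic complex $\mathbb{P}=(P_*,d,d')$ in $\mathcal{N}$ is a graded object $P_*$ of $\mathcal{N}$ supported on a finite subset of $[0,\infty)$, together with two degree $-1$ maps $d,d'$ (top and bottom differentials) such that both $\mathbb{P}^\top=(P_*,d)$ and $\mathbb{P}^\bot=(P_*,d')$ are acyclic chain complexes (each differential $P_n\to P_{n-1}$ factors as an admissible epimorphism $P_n\twoheadrightarrow J_{n-1}$ followed by an admissible monomorphism $J_{n-1}\rightarrowtail P_{n-1}$ with $J_n\rightarrowtail P_n\twoheadrightarrow J_{n-1}$ short exact for all $n$). It is diagonal if $d=d'$. Morphisms are degree-$0$ maps that are chain maps for both differentials; with degreewise short exact sequences these form an exact category. For $k\ge0$, $B_1^k(\mathcal{N})$ is the Grothendieck group of the exact category of binary acyclic complexes supported on $[0,k]$, and $K_1^k(\mathcal{N})$ is its quotient by classes of diagonal complexes. For isomorphisms $\alpha,\beta\colon P\to Q$, $\langle\alpha,\beta\rangle$ is the class of the binary complex with $P$ in degree $1$, $Q$ in degree $0$, top differential $\alpha$,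 bottom differential $\beta$. A binary ladder is $(\mathbb{P},\mathbb{Q},\sigma,\tau)$ with $\sigma\colon\mathbb{P}^\top\to\mathbb{Q}^\top$, $\tau\colon\mathbb{P}^\bot\to\mathbb{Q}^\bot$ chain isomorphisms. For $k\ge1$, $L_1^k(\mathcal{N})$ is the quotient of $K_1^k(\mathcal{N})$ by the relations $\mathbb{Q}-\mathbb{P}=\sum_{i=0}^k(-1)^i\langle\sigma_i,\tau_i\rangle$ for all binary ladders with $\mathbb{P},\mathbb{Q}$ supported on $[0,k]$, $P_i=Q_i$ for all $i$, and all $\sigma_i,\tau_i$ involutions. *)

(* Defs.v *)
From HB Require Import structures.
From mathcomp Require Import all_boot all_order all_algebra.
Set Implicit Arguments. Unset Strict Implicit. Unset Printing Implicit Defensive.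
Import GRing.Theory.
Local Open Scope ring_scope.

Record PreAddCat := {
  Obj : Type;
  Hom : Obj -> Obj -> zmodType;
  comp : forall A B C : Obj, Hom B C -> Hom A B -> Hom A C;
  idm : forall A : Obj, Hom A A;
  comp_assoc : forall A B C D (h : Hom C D) (g : Hom B C) (f : Hom A B),
      comp h (comp g f) = comp (comp h g) f;
  comp_id_l : forall A B (f : Hom A B), comp (idm B) f = f;
  comp_id_r : forall A B (f : Hom A B), comp f (idm A) = f;
  compDl : forall A B C (g1 g2 : Hom B C) (f : Hom A B),
      comp (g1 + g2) f = comp g1 f + comp g2 f;
  compDr : forall A B C (g : Hom B C) (f1 f2 : Hom A B),
      comp g (f1 + f2) = comp g f1 + comp g f2
}.

Arguments comp {_ _ _ _}.
Arguments idm {_}.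

Section CatDefs.
Variable C : PreAddCat.
Local Notation Ob := (Obj C).
Local Notation "g \oc f" := (comp g f) (at level 40, left associativity).

Definition is_zero_obj (Z : Ob) : Prop :=
  forall A : Ob, (forall f g : Hom Z A, f = g) /\ (forall f g : Hom A Z, f = g).

Definition is_iso (A B : Ob) (f : Hom A B) : Prop :=
  exists g : Hom B A, g \oc f = idm A /\ f \oc g = idm B.

Definition is_biproduct (A B S : Ob) (i1 : Hom A S) (i2 : Hom B S)
    (p1 : Hom S A) (p2 : Hom S B) : Prop :=
  [/\ p1 \oc i1 = idm A, p2 \oc i2 = idm B, p1 \oc i2 = 0, p2 \oc i1 = 0
    & i1 \oc p1 + i2 \oc p2 = idm S].

Definition is_kernel (K A B : Ob) (i : Hom K A) (p : Hom A B) : Prop :=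
  p \oc i = 0 /\
  forall (X : Ob) (g : Hom X A), p \oc g = 0 -> exists! h : Hom X K, i \oc h = g.

Definition is_cokernel (A B Q : Ob) (i : Hom A B) (p : Hom B Q) : Prop :=
  p \oc i = 0 /\
  forall (X : Ob) (g : Hom B X), g \oc i = 0 -> exists! h : Hom Q X, h \oc p = g.

Definition is_pushout (A B A' B' : Ob) (i : Hom A B) (f : Hom A A')
    (i' : Hom A' B') (f' : Hom B B') : Prop :=
  i' \oc f = f' \oc i /\
  forall (X : Ob) (u : Hom A' X) (v : Hom B X), u \oc f = v \oc i ->
    exists! h : Hom B' X, h \oc i' = u /\ h \oc f' = v.

Definition is_pullback (B C C' B' : Ob) (p : Hom B C) (f : Hom C' C)
    (p' : Hom B' C') (f' : Hom B' B) : Prop :=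
  f \oc p' = p \oc f' /\
  forall (X : Ob) (u : Hom X C') (v : Hom X B), f \oc u = p \oc v ->
    exists! h : Hom X B', p' \oc h = u /\ f' \oc h = v.

End CatDefs.

Record ExactCat := {
  ecat :> PreAddCat;
  zero_ob : Obj ecat;
  zero_obP : is_zero_obj zero_ob;
  biprod_ex : forall A B : Obj ecat, exists (S : Obj ecat) (i1 : Hom A S)
      (i2 : Hom B S) (p1 : Hom S A) (p2 : Hom S B), is_biproduct i1 i2 p1 p2;
  (* the class of conflations (admissible short exact sequences) *)
  conf : forall A B C : Obj ecat, Hom A B -> Hom B C -> Prop;
  conf_kc : forall A B C (i : Hom A B) (p : Hom B C),
      conf i p -> is_kernel i p /\ is_cokernel i p;
  conf_iso : forall A B C A' B' C' (i : Hom A B) (p : Hom B C)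
      (i' : Hom A' B') (p' : Hom B' C')
      (a : Hom A A') (b : Hom B B') (c : Hom C C'),
      is_iso a -> is_iso b -> is_iso c ->
      comp i' a = comp b i -> comp p' b = comp c p ->
      conf i p -> conf i' p';
  conf_id_mono : forall A : Obj ecat, exists (Z : Obj ecat) (p : Hom A Z),
      conf (idm A) p;
  conf_id_epi : forall A : Obj ecat, exists (Z : Obj ecat) (i : Hom Z A),
      conf i (idm A);
  conf_mono_comp : forall A B D (i : Hom A B) (j : Hom B D),
      (exists (C : Obj ecat) (p : Hom B C), conf i p) ->
      (exists (C : Obj ecat) (p : Hom D C), conf j p) ->
      exists (C : Obj ecat) (p : Hom D C), conf (comp j i) p;
  conf_epi_comp : forall B C D (p : Hom B C) (q : Hom C D),
      (exists (A : Obj ecat) (i : Hom A B), conf i p) ->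
      (exists (A : Obj ecat) (i : Hom A C), conf i q) ->
      exists (A : Obj ecat) (i : Hom A B), conf i (comp q p);
  conf_pushout : forall A B A' (i : Hom A B) (f : Hom A A'),
      (exists (C : Obj ecat) (p : Hom B C), conf i p) ->
      exists (B' : Obj ecat) (i' : Hom A' B') (f' : Hom B B'),
        is_pushout i f i' f' /\ exists (C : Obj ecat) (p : Hom B' C), conf i' p;
  conf_pullback : forall B C C' (p : Hom B C) (f : Hom C' C),
      (exists (A : Obj ecat) (i : Hom A B), conf i p) ->
      exists (B' : Obj ecat) (p' : Hom B' C') (f' : Hom B' B),
        is_pullback p f p' f' /\ exists (A : Obj ecat) (i : Hom A B'), conf i p'
}.

Arguments conf {_ _ _ _}.

Section Binary.
Variable N : ExactCat.
Local Notation Ob := (Obj N).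
Local Notation "g \oc f" := (comp g f) (at level 40, left associativity).

(* graded object P_n (n >= 0; all negative degrees are zero) with top and
   bottom differentials d_n, d'_n : P_(n+1) -> P_n *)
Record BinComplex := BinC {
  obj : nat -> Ob;
  dtop : forall n, Hom (obj n.+1) (obj n);
  dbot : forall n, Hom (obj n.+1) (obj n)
}.

Definition supported (k : nat) (X : BinComplex) : Prop :=
  forall n, (k < n)%N -> is_zero_obj (obj X n).

(* acyclicity of (P, d): d_n = m_n o e_n with J_(n+1) >-> P_(n+1) ->> J_n
   a conflation for all n >= 0, and J_0 >-> P_0 ->> J_(-1) = 0 a conflation *)
Definition acyclic (P : nat -> Ob) (d : forall n, Hom (P n.+1) (P n)) : Prop :=
  exists (J : nat -> Ob) (e : forall n, Hom (P n.+1) (J n))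
         (m : forall n, Hom (J n) (P n)),
    [/\ forall n, d n = m n \oc e n,
        forall n, conf (m n.+1) (e n)
      & exists (Z : Ob) (z : Hom (P 0%N) Z), is_zero_obj Z /\ conf (m 0%N) z].

Definition BinAcyc (k : nat) (X : BinComplex) : Prop :=
  [/\ supported k X, acyclic (@dtop X) & acyclic (@dbot X)].

Definition diagonal (X : BinComplex) : Prop := forall n, dtop X n = dbot X n.

Definition is_bmorph (X Y : BinComplex) (f : forall n, Hom (obj X n) (obj Y n))
  : Prop :=
  forall n, f n \oc dtop X n = dtop Y n \oc f n.+1 /\
            f n \oc dbot X n = dbot Y n \oc f n.+1.

(* <alpha, beta>: P in degree 1, Q in degree 0 *)
Definition angle_obj (P Q : Ob) (n : nat) : Ob :=
  match n with 0 => Q | 1 => P | _ => zero_ob N end.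

Definition angle_d (P Q : Ob) (a : Hom P Q) (n : nat)
  : Hom (angle_obj P Q n.+1) (angle_obj P Q n) :=
  match n return Hom (angle_obj P Q n.+1) (angle_obj P Q n) with
  | 0 => a | _.+1 => 0 end.

Definition angle (P Q : Ob) (a b : Hom P Q) : BinComplex :=
  BinC (angle_d a) (angle_d b).

(* f : BinComplex -> A induces a homomorphism K_1^k(N) -> A sending the class
   [X] to f X: it is additive on (degreewise) conflations of binary acyclic
   complexes supported on [0,k], and vanishes on diagonal ones. *)
Definition K1_additive (k : nat) (A : zmodType) (f : BinComplex -> A) : Prop :=
  (forall (X Y Z : BinComplex) (a : forall n, Hom (obj X n) (obj Y n))
          (b : forall n, Hom (obj Y n) (obj Z n)),
      BinAcyc k X -> BinAcyc k Y -> BinAcyc k Z ->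
      is_bmorph a -> is_bmorph b -> (forall n, conf (a n) (b n)) ->
      f Y = f X + f Z)
  /\ (forall X : BinComplex, BinAcyc k X -> diagonal X -> f X = 0).

Definition chain_map (P : nat -> Ob) (d1 d2 : forall n, Hom (P n.+1) (P n))
    (s : forall n, Hom (P n) (P n)) : Prop :=
  forall n, s n \oc d1 n = d2 n \oc s n.+1.

Definition involution (P : Ob) (s : Hom P P) : Prop := s \oc s = idm P.

(* f moreover induces a homomorphism L_1^k(N) -> A: it kills the ladder
   relations  [Q] - [P] = sum_(i=0)^k (-1)^i <sigma_i, tau_i>  for binary
   ladders (P, Q, sigma, tau) on [0,k] with P_i = Q_i and sigma_i, tau_i
   involutions. *)
Definition L1_additive (k : nat) (A : zmodType) (f : BinComplex -> A) : Prop :=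
  K1_additive k f /\
  forall (P : nat -> Ob) (d d' e e' : forall n, Hom (P n.+1) (P n))
         (s t : forall n, Hom (P n) (P n)),
    BinAcyc k (BinC d d') -> BinAcyc k (BinC e e') ->
    chain_map d e s -> chain_map d' e' t ->
    (forall i, involution (s i)) -> (forall i, involution (t i)) ->
    f (BinC e e') - f (BinC d d') =
      \sum_(i < k.+1) (f (angle (s i) (t i)) *~ ((-1) ^+ i)).

End Binary.

(* Main.v *)
Require Import Defs.
From mathcomp Require Import all_boot all_order all_algebra.
From Stdlib Require Import ClassicalEpsilon FunctionalExtensionality.
Set Implicit Arguments. Unset Strict Implicit. Unset Printing Implicit Defensive.
Import GRing.Theory.
Local Open Scope ring_scope.
Local Notation "g \oc f" := (Defs.comp g f) (at level 40, left associativity).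


Section Basic.
Variable N : ExactCat.
Local Notation Ob := (Obj N).
Local Notation H := (@Defs.Hom (ecat N)).

Lemma comp0l (A B C : Ob) (f : H A B) : (0 : H B C) \oc f = 0.
Proof. by apply: (addrI ((0 : H B C) \oc f)); rewrite -compDl !addr0. Qed.
Lemma comp0r (A B C : Ob) (g : H B C) : g \oc (0 : H A B) = 0.
Proof. by apply: (addrI (g \oc (0 : H A B))); rewrite -compDr !addr0. Qed.
Lemma compNl (A B C : Ob) (g : H B C) (f : H A B) : (- g) \oc f = - (g \oc f).
Proof. by apply: (addrI (g \oc f)); rewrite -compDl !subrr comp0l. Qed.
Lemma compNr (A B C : Ob) (g : H B C) (f : H A B) : g \oc (- f) = - (g \oc f).
Proof. by apply: (addrI (g \oc f)); rewrite -compDr !subrr comp0r. Qed.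
Lemma compBl (A B C : Ob) (g1 g2 : H B C) (f : H A B) : (g1 - g2) \oc f = g1 \oc f - g2 \oc f.
Proof. by rewrite compDl compNl. Qed.
Lemma compBr (A B C : Ob) (g : H B C) (f1 f2 : H A B) : g \oc (f1 - f2) = g \oc f1 - g \oc f2.
Proof. by rewrite compDr compNr. Qed.

Lemma zero_from (Z A : Ob) : is_zero_obj Z -> forall f : H Z A, f = 0.
Proof. by move=> hZ f; apply: (proj1 (hZ A)). Qed.
Lemma zero_to (Z A : Ob) : is_zero_obj Z -> forall f : H A Z, f = 0.
Proof. by move=> hZ f; apply: (proj2 (hZ A)). Qed.
Lemma zero_ob0 : is_zero_obj (zero_ob N).
Proof. exact: zero_obP. Qed.

Lemma is_iso_id (A : Ob) : is_iso (idm A).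
Proof. by exists (idm A); rewrite comp_id_l. Qed.
Lemma is_isoN (A B : Ob) (f : H A B) : is_iso f -> is_iso (- f).
Proof. by case=> g [h1 h2]; exists (- g); split; rewrite compNl compNr opprK. Qed.
Lemma is_iso_zero (Z Z' : Ob) (f : H Z Z') : is_zero_obj Z -> is_zero_obj Z' -> is_iso f.
Proof.
move=> h1 h2; exists 0; split; first exact: (proj1 (h1 Z)).
exact: (proj1 (h2 Z')).
Qed.

Lemma coker_id_zero (A Z : Ob) (p : H A Z) : conf (idm A) p -> is_zero_obj Z.
Proof.
move=> /conf_kc [_ [hp hU]].
have p0 : p = 0 by rewrite -hp comp_id_r.
have id0 : idm Z = 0.
  case: (hU Z 0); first by rewrite comp0l.
  move=> h [_ hu]; rewrite -(hu (idm Z)) ?comp_id_l ?p0 ?comp0r //.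
  by rewrite -(hu 0) // comp0l.
move=> X; split=> f g.
- case: (hU X 0); first by rewrite comp0l.
  move=> h [_ hu]; rewrite -(hu f) ?p0 ?comp0r // -(hu g) // p0 comp0r //.
- by rewrite -(comp_id_l f) -(comp_id_l g) id0 !comp0l.
Qed.

Lemma ker_id_zero (A Z : Ob) (i : H Z A) : conf i (idm A) -> is_zero_obj Z.
Proof.
move=> /conf_kc [[hi hU] _].
have i0 : i = 0 by rewrite -hi comp_id_l.
have id0 : idm Z = 0.
  case: (hU Z 0); first by rewrite comp0r.
  move=> h [_ hu]; rewrite -(hu (idm Z)) ?comp_id_r ?i0 ?comp0l //.
  by rewrite -(hu 0) // comp0r.
move=> X; split=> f g.
- by rewrite -(comp_id_r f) -(comp_id_r g) id0 !comp0r.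
- case: (hU X 0); first by rewrite comp0r.
  move=> h [_ hu]; rewrite -(hu f) ?i0 ?comp0l // -(hu g) // i0 comp0l //.
Qed.

Lemma conf_iso_zero (A B Z : Ob) (a : H A B) (z : H B Z) :
  is_iso a -> is_zero_obj Z -> conf a z.
Proof.
move=> ha hZ; case: (conf_id_mono A) => Z' [p hp].
have hZ' := coker_id_zero hp.
apply: (conf_iso (a:=idm A) (b:=a) (c:=0) _ ha _ _ _ hp).
- exact: is_iso_id.
- exact: is_iso_zero.
- by rewrite !comp_id_r.
- exact: (proj2 (hZ A)).
Qed.

Lemma conf_zero_iso (Z A B : Ob) (z : H Z A) (a : H A B) :
  is_zero_obj Z -> is_iso a -> conf z a.
Proof.
move=> hZ ha; case: (conf_id_epi A) => Z' [i hi].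
have hZ' := ker_id_zero hi.
apply: (conf_iso (a:=0) (b:=idm A) (c:=a) _ _ ha _ _ hi).
- exact: is_iso_zero.
- exact: is_iso_id.
- exact: (proj1 (hZ' A)).
- by [].
Qed.

Lemma conf_zzz (Z1 Z2 Z3 : Ob) (f : H Z1 Z2) (g : H Z2 Z3) :
  is_zero_obj Z1 -> is_zero_obj Z2 -> is_zero_obj Z3 -> conf f g.
Proof. move=> h1 h2 h3; apply: conf_iso_zero => //; exact: is_iso_zero. Qed.

End Basic.

Section Bip.
Variable N : ExactCat.
Local Notation Ob := (Obj N).
Local Notation H := (@Defs.Hom (ecat N)).

Lemma split_conf (A B S : Ob) (i1 : H A S) (i2 : H B S) (p1 : H S A) (p2 : H S B) :
  is_biproduct i1 i2 p1 p2 -> conf i1 p2.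
Proof.
case=> e11 e22 e12 e21 eid.
case: (conf_id_epi B) => Z [i hi]; have hZ := ker_id_zero hi.
case: (@conf_pushout _ _ _ _ i (0 : H Z A) (ex_intro _ B (ex_intro _ (idm B) hi)))
  => B' [i' [f' [[hcomm hpo] [C [p' hp']]]]].
case: (hpo S i1 i2); first exact: (proj1 (hZ S)).
move=> psi [[psi1 psi2] psiU].
pose phi := i' \oc p1 + f' \oc p2.
have phipsi : phi \oc psi = idm B'.
  case: (hpo B' i' f'); first exact: (proj1 (hZ B')).
  move=> h [_ hU].
  rewrite -(hU (idm B')) ?comp_id_l //.
  apply/esym; apply: hU; rewrite /phi -!comp_assoc psi1 psi2 !compDl -!comp_assoc e11 e12 e21 e22.
  by rewrite !comp0r !comp_id_r addr0 add0r.
have psiphi : psi \oc phi = idm S.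
  by rewrite /phi compDr !comp_assoc psi1 psi2.
case: (conf_kc hp') => _ [hp'i coU].
case: (coU B (p2 \oc psi)).
  by rewrite -comp_assoc psi1 e21.
move=> c [hc cU].
have hci : is_iso c.
  exists (p' \oc f'); split.
  - have -> : p' \oc f' \oc c = idm C.
      case: (coU C p'); first exact: hp'i.
      move=> h [_ hU]; rewrite -(hU (idm C)) ?comp_id_l //; apply/esym; apply: hU.
      rewrite -comp_assoc hc.
      rewrite -{2}(comp_id_r p') -phipsi /phi.
      by rewrite compDl compDr !comp_assoc hp'i !comp0l add0r.
    by [].
  - by rewrite comp_assoc hc -comp_assoc psi2.
apply: (conf_iso (a:=idm A) (b:=psi) (c:=c) _ _ hci _ _ hp').
- exact: is_iso_id.
- by exists phi.
- by rewrite comp_id_r psi1.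
- by rewrite hc.
Qed.

Lemma biprod_flip (A B S : Ob) (i1 : H A S) (i2 : H B S) (p1 : H S A) (p2 : H S B) :
  is_biproduct i1 i2 p1 p2 -> is_biproduct i2 i1 p2 p1.
Proof. by case=> *; split => //; rewrite addrC. Qed.

Lemma bip_ex (A B : Ob) : exists x : {S : Ob & (H A S * H B S * H S A * H S B)%type},
  is_biproduct (projT2 x).1.1.1 (projT2 x).1.1.2 (projT2 x).1.2 (projT2 x).2.
Proof.
case: (biprod_ex A B) => S [i1 [i2 [p1 [p2 h]]]].
by exists (existT _ S (i1, i2, p1, p2)).
Qed.

Definition bipd (A B : Ob) := proj1_sig (constructive_indefinite_description _ (bip_ex A B)).
Definition Bi (A B : Ob) : Ob := projT1 (bipd A B).
Definition in1 (A B : Ob) : H A (Bi A B) := (projT2 (bipd A B)).1.1.1.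
Definition in2 (A B : Ob) : H B (Bi A B) := (projT2 (bipd A B)).1.1.2.
Definition pr1 (A B : Ob) : H (Bi A B) A := (projT2 (bipd A B)).1.2.
Definition pr2 (A B : Ob) : H (Bi A B) B := (projT2 (bipd A B)).2.

Lemma BiP (A B : Ob) : is_biproduct (in1 A B) (in2 A B) (pr1 A B) (pr2 A B).
Proof. exact: (proj2_sig (constructive_indefinite_description _ (bip_ex A B))). Qed.

Lemma p1i1 A B : pr1 A B \oc in1 A B = idm A. Proof. by case: (BiP A B). Qed.
Lemma p2i2 A B : pr2 A B \oc in2 A B = idm B. Proof. by case: (BiP A B). Qed.
Lemma p1i2 A B : pr1 A B \oc in2 A B = 0. Proof. by case: (BiP A B). Qed.
Lemma p2i1 A B : pr2 A B \oc in1 A B = 0. Proof. by case: (BiP A B). Qed.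
Lemma bip_id A B : in1 A B \oc pr1 A B + in2 A B \oc pr2 A B = idm (Bi A B).
Proof. by case: (BiP A B). Qed.

Lemma p1i1L A B X (h : H A X) : h \oc pr1 A B \oc in1 A B = h.
Proof. by rewrite -comp_assoc p1i1 comp_id_r. Qed.
Lemma p2i2L A B X (h : H B X) : h \oc pr2 A B \oc in2 A B = h.
Proof. by rewrite -comp_assoc p2i2 comp_id_r. Qed.
Lemma p1i2L A B X (h : H A X) : h \oc pr1 A B \oc in2 A B = 0.
Proof. by rewrite -comp_assoc p1i2 comp0r. Qed.
Lemma p2i1L A B X (h : H B X) : h \oc pr2 A B \oc in1 A B = 0.
Proof. by rewrite -comp_assoc p2i1 comp0r. Qed.

Lemma bip_extR A B X (h h' : H (Bi A B) X) :
  h \oc in1 A B = h' \oc in1 A B -> h \oc in2 A B = h' \oc in2 A B -> h = h'.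
Proof.
move=> e1 e2; rewrite -(comp_id_r h) -(comp_id_r h') -bip_id !compDr.
by rewrite !comp_assoc e1 e2.
Qed.
Lemma bip_extL A B X (h h' : H X (Bi A B)) :
  pr1 A B \oc h = pr1 A B \oc h' -> pr2 A B \oc h = pr2 A B \oc h' -> h = h'.
Proof.
move=> e1 e2; rewrite -(comp_id_l h) -(comp_id_l h') -bip_id !compDl.
by rewrite -!comp_assoc e1 e2.
Qed.

Lemma conf12 A B : conf (in1 A B) (pr2 A B).
Proof. exact: split_conf (BiP A B). Qed.
Lemma conf21 A B : conf (in2 A B) (pr1 A B).
Proof. exact: split_conf (biprod_flip (BiP A B)). Qed.

Lemma Bi_zero A B : is_zero_obj A -> is_zero_obj B -> is_zero_obj (Bi A B).
Proof.
move=> hA hB.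
have id0 : idm (Bi A B) = 0.
  by rewrite -bip_id (zero_from hA (in1 A B)) (zero_from hB (in2 A B)) !comp0l addr0.
move=> X; split=> f g.
- by rewrite -(comp_id_r f) -(comp_id_r g) id0 !comp0r.
- by rewrite -(comp_id_l f) -(comp_id_l g) id0 !comp0l.
Qed.

End Bip.

Section Cx.
Variable N : ExactCat.
Local Notation Ob := (Obj N).
Local Notation H := (@Defs.Hom (ecat N)).

Lemma p1i1R A B X (h : H X A) : pr1 A B \oc (in1 A B \oc h) = h.
Proof. by rewrite comp_assoc p1i1 comp_id_l. Qed.
Lemma p2i2R A B X (h : H X B) : pr2 A B \oc (in2 A B \oc h) = h.
Proof. by rewrite comp_assoc p2i2 comp_id_l. Qed.
Lemma p1i2R A B X (h : H X B) : pr1 A B \oc (in2 A B \oc h) = 0.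
Proof. by rewrite comp_assoc p1i2 comp0l. Qed.
Lemma p2i1R A B X (h : H X A) : pr2 A B \oc (in1 A B \oc h) = 0.
Proof. by rewrite comp_assoc p2i1 comp0l. Qed.

Ltac simpc1 := rewrite ?compDl ?compDr ?compNl ?compNr ?comp0l ?comp0r -?comp_assoc
  ?p1i1 ?p2i2 ?p1i2 ?p2i1 ?p1i1R ?p2i2R ?p1i2R ?p2i1R ?comp_id_l ?comp_id_r
  ?comp0l ?comp0r ?oppr0 ?addr0 ?add0r ?subr0 ?sub0r ?opprK ?subrr ?addNr ?addKr ?addNKr.
Ltac simpc := do 3 simpc1.

Lemma bip_ext4 A B C D (h h' : H (Bi A B) (Bi C D)) :
  pr1 C D \oc h \oc in1 A B = pr1 C D \oc h' \oc in1 A B ->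
  pr1 C D \oc h \oc in2 A B = pr1 C D \oc h' \oc in2 A B ->
  pr2 C D \oc h \oc in1 A B = pr2 C D \oc h' \oc in1 A B ->
  pr2 C D \oc h \oc in2 A B = pr2 C D \oc h' \oc in2 A B -> h = h'.
Proof.
move=> e1 e2 e3 e4; apply: bip_extL; apply: bip_extR; by rewrite ?e1 ?e2 ?e3 ?e4.
Qed.

Definition Sobj (X : nat -> Ob) (n : nat) : Ob :=
  match n with 0 => zero_ob N | n'.+1 => X n' end.
Definition Sd (X : nat -> Ob) (d : forall n, H (X n.+1) (X n)) (n : nat)
  : H (Sobj X n.+1) (Sobj X n) :=
  match n return H (Sobj X n.+1) (Sobj X n) with 0 => 0 | n'.+1 => d n' end.
Definition Sh (X : BinComplex N) : BinComplex N := BinC (Sd (@dtop N X)) (Sd (@dbot N X)).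
Definition negC (X : BinComplex N) : BinComplex N :=
  BinC (fun n => - dtop X n) (fun n => - dbot X n).

Definition Pd (P : nat -> Ob) (d : forall n, H (P n.+1) (P n)) (n : nat) : H (P n) (Sobj P n) :=
  match n return H (P n) (Sobj P n) with 0 => 0 | n'.+1 => - d n' end.
Definition Cobj (P Q : nat -> Ob) (n : nat) : Ob := Bi (Q n) (Sobj P n).
Definition Cd (P Q : nat -> Ob) (d : forall n, H (P n.+1) (P n)) (e : forall n, H (Q n.+1) (Q n))
  (s : forall n, H (P n) (Q n)) (n : nat) : H (Cobj P Q n.+1) (Cobj P Q n) :=
  in1 _ _ \oc e n \oc pr1 _ _ + in1 _ _ \oc s n \oc pr2 (Q n.+1) (P n)
  + in2 _ _ \oc Pd d n \oc pr2 (Q n.+1) (P n).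
Definition Cone (P Q : nat -> Ob) (d d' : forall n, H (P n.+1) (P n))
  (e e' : forall n, H (Q n.+1) (Q n)) (s t : forall n, H (P n) (Q n)) : BinComplex N :=
  @BinC N (Cobj P Q) (Cd d e s) (Cd d' e' t).

Lemma cone_acyclic (P Q : nat -> Ob) (d : forall n, H (P n.+1) (P n))
  (e : forall n, H (Q n.+1) (Q n)) (s : forall n, H (P n) (Q n)) :
  (forall n, is_iso (s n)) -> (forall n, s n \oc d n = e n \oc s n.+1) -> (forall n, e n \oc e n.+1 = 0) ->
  acyclic (Cd d e s).
Proof.
move=> hs hch hee.
have hs' : forall n, { g : H (Q n) (P n) | g \oc s n = idm _ /\ s n \oc g = idm _ }.
  by move=> n; apply: constructive_indefinite_description; exact: hs.
pose sinv n := proj1_sig (hs' n).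
have sK n : sinv n \oc s n = idm _ by rewrite /sinv; case: (proj2_sig (hs' n)).
have sKV n : s n \oc sinv n = idm _ by rewrite /sinv; case: (proj2_sig (hs' n)).
have sKR n X (h : H X (Q n)) : s n \oc (sinv n \oc h) = h by rewrite comp_assoc sKV comp_id_l.
have sKR' n X (h : H X (P n)) : sinv n \oc (s n \oc h) = h by rewrite comp_assoc sK comp_id_l.
pose Phi n : H (Q n) (Sobj P n) :=
  match n return H (Q n) (Sobj P n) with 0 => 0 | n'.+1 => sinv n' \oc e n' end.
pose E n : H (Cobj P Q n.+1) (Q n) := e n \oc pr1 _ _ + s n \oc pr2 (Q n.+1) (P n).
pose M n : H (Q n) (Cobj P Q n) := in1 _ _ - in2 _ _ \oc Phi n.
exists Q, E, M; split.
- move=> n; apply: bip_extL; rewrite /Cd /M /E; simpc => //.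
  case: n => [|n] /=; simpc => //.
  have hchR X (h : H X (P n.+1)) : e n \oc (s n.+1 \oc h) = s n \oc (d n \oc h).
    by rewrite !comp_assoc hch.
  have heeR X (h : H X (Q n.+2)) : e n \oc (e n.+1 \oc h) = 0.
    by rewrite comp_assoc hee comp0l.
  by rewrite hchR heeR sKR' comp0r oppr0 sub0r.
- move=> n.
  pose psi := in1 _ _ \oc pr1 _ _ - in2 _ _ \oc Phi n.+1 \oc pr1 _ _ + in2 _ _ \oc pr2 (Q n.+1) (P n).
  pose psi' := in1 _ _ \oc pr1 _ _ + in2 _ _ \oc Phi n.+1 \oc pr1 _ _ + in2 _ _ \oc pr2 (Q n.+1) (P n).
  apply: (conf_iso (a:=idm _) (b:=psi) (c:=s n) _ _ (hs n) _ _ (conf12 (Q n.+1) (P n))).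
  + exact: is_iso_id.
  + exists psi'; split; apply: bip_ext4; rewrite /psi /psi'; simpc => // => //.
  + by rewrite /M /psi; simpc.
  + apply: bip_extR; rewrite /E /psi /=; simpc => //.
    by rewrite sKR subrr.
- exists (zero_ob N); exists (pr2 (Q 0) (zero_ob N)); split; first exact: zero_ob0.
  by rewrite /M /=; simpc; exact: conf12.
Qed.

End Cx.

Section Cx2.
Variable N : ExactCat.
Local Notation Ob := (Obj N).
Local Notation H := (@Defs.Hom (ecat N)).

Lemma zto_eq (Z X : Ob) (f g : H X Z) : is_zero_obj Z -> f = g.
Proof. by move=> hZ; apply: (proj2 (hZ X)). Qed.
Lemma zfrom_eq (Z X : Ob) (f g : H Z X) : is_zero_obj Z -> f = g.
Proof. by move=> hZ; apply: (proj1 (hZ X)). Qed.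

Lemma acyclic_Sh (X : nat -> Ob) (d : forall n, H (X n.+1) (X n)) :
  acyclic d -> acyclic (Sd d).
Proof.
case=> J [e [m [hd hc [Z [z [hZ hz]]]]]].
pose e' n : H (Sobj X n.+1) (Sobj J n) :=
  match n return H (Sobj X n.+1) (Sobj J n) with 0 => 0 | n'.+1 => e n' end.
pose m' n : H (Sobj J n) (Sobj X n) :=
  match n return H (Sobj J n) (Sobj X n) with 0 => 0 | n'.+1 => m n' end.
exists (Sobj J), e', m'; split.
- by case=> [|n] /=; [rewrite comp0l | exact: hd].
- case=> [|n] /=; last exact: hc.
  apply: (conf_iso (a:=idm _) (b:=idm _) (c:=0) _ _ _ _ _ hz).
  + exact: is_iso_id.
  + exact: is_iso_id.
  + exact: is_iso_zero hZ (@zero_ob0 N).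
  + by rewrite comp_id_l comp_id_r.
  + by rewrite comp0l comp0l.
- exists (zero_ob N), 0; split; first exact: zero_ob0.
  apply: conf_zzz; exact: zero_ob0.
Qed.

Lemma acyclic_neg (X : nat -> Ob) (d : forall n, H (X n.+1) (X n)) :
  acyclic d -> acyclic (fun n => - d n).
Proof.
case=> J [e [m [hd hc h0]]].
exists J, (fun n => - e n), m; split => //.
- by move=> n; rewrite compNr hd.
- move=> n; apply: (conf_iso (a:=idm _) (b:=idm _) (c:=- idm _) _ _ _ _ _ (hc n)).
  + exact: is_iso_id.
  + exact: is_iso_id.
  + exact/is_isoN/is_iso_id.
  + by rewrite comp_id_l comp_id_r.
  + by rewrite compNl compNl comp_id_l comp_id_r.
Qed.

Lemma BinAcyc_mono k k' (X : BinComplex N) : (k <= k')%N -> BinAcyc k X -> BinAcyc k' X.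
Proof.
move=> hk [hs ht hb]; split => // n hn; apply: hs; exact: leq_ltn_trans hn.
Qed.

Lemma BinAcyc_Sh k (X : BinComplex N) : BinAcyc k X -> BinAcyc k.+1 (Sh X).
Proof.
case=> hs ht hb; split; [|exact: acyclic_Sh|exact: acyclic_Sh].
by case=> [|n] //= hn; apply: hs.
Qed.

Lemma iter_Sh_obj j (X : BinComplex N) n : (n < j)%N -> is_zero_obj (obj (iter j (@Sh N) X) n).
Proof.
elim: j n => [|j IH] [|n] //= hn; try exact: zero_ob0.
exact: IH.
Qed.

Lemma BinAcyc_neg k (X : BinComplex N) : BinAcyc k X -> BinAcyc k (negC X).
Proof. by case=> hs ht hb; split => //; apply: acyclic_neg. Qed.

Lemma angle_acyclic (P Q : Ob) (a : H P Q) : is_iso a -> acyclic (angle_d a).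
Proof.
move=> ha.
pose J n : Ob := match n with 0 => Q | _ => zero_ob N end.
pose e n : H (angle_obj P Q n.+1) (J n) :=
  match n return H (angle_obj P Q n.+1) (J n) with 0 => a | _.+1 => 0 end.
pose m n : H (J n) (angle_obj P Q n) :=
  match n return H (J n) (angle_obj P Q n) with 0 => idm Q | _.+1 => 0 end.
exists J, e, m; split.
- by case=> [|n] /=; rewrite ?comp_id_l ?comp0l.
- case=> [|n] /=; first by apply: conf_zero_iso => //; exact: zero_ob0.
  by apply: conf_zzz; exact: zero_ob0.
- exists (zero_ob N), 0; split; first exact: zero_ob0.
  by apply: conf_iso_zero; [exact: is_iso_id | exact: zero_ob0].
Qed.

Lemma BinAcyc_angle k (P Q : Ob) (a b : H P Q) : (1 <= k)%N -> is_iso a -> is_iso b ->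
  BinAcyc k (angle a b).
Proof.
move=> hk ha hb; split; [|exact: angle_acyclic|exact: angle_acyclic].
move=> [|[|n]] hn /=; try exact: zero_ob0.
- by [].
- by move: hn; rewrite ltnS leqn0 => /eqP hk0; rewrite hk0 in hk.
Qed.

Definition Z0 : BinComplex N := @BinC N (fun _ => zero_ob N) (fun _ => 0) (fun _ => 0).

Lemma zero_acyclic : acyclic (@dtop N Z0).
Proof.
exists (fun _ => zero_ob N), (fun _ => 0), (fun _ => 0); split.
- by move=> n /=; rewrite comp0l.
- by move=> n; apply: conf_zzz; exact: zero_ob0.
- exists (zero_ob N), 0; split; first exact: zero_ob0.
  by apply: conf_zzz; exact: zero_ob0.
Qed.

Lemma BinAcyc_Z0 k : BinAcyc k Z0.
Proof. by split; [move=> n _; exact: zero_ob0 | exact: zero_acyclic | exact: zero_acyclic]. Qed.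

Lemma zero_diag (X : BinComplex N) : (forall n, is_zero_obj (obj X n)) -> diagonal X.
Proof. by move=> hz n; rewrite (zero_to (hz n) (dtop X n)) (zero_to (hz n) (dbot X n)). Qed.

Lemma diag_Sh (X : BinComplex N) : diagonal X -> diagonal (Sh X).
Proof. by move=> hd [|n] //=. Qed.

Definition seqOK k (X Y Z : BinComplex N) : Prop :=
  [/\ BinAcyc k X, BinAcyc k Y, BinAcyc k Z &
    exists (a : forall n, H (obj X n) (obj Y n)) (b : forall n, H (obj Y n) (obj Z n)),
      [/\ @is_bmorph N X Y a, @is_bmorph N Y Z b & forall n, conf (a n) (b n)]].

Lemma seqOK_Sh k X Y Z : seqOK k X Y Z -> seqOK k.+1 (Sh X) (Sh Y) (Sh Z).
Proof.
case=> hX hY hZ [a [b [ha hb hc]]].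
split; try exact: BinAcyc_Sh.
pose a' n : H (Sobj (obj X) n) (Sobj (obj Y) n) :=
  match n return H (Sobj (obj X) n) (Sobj (obj Y) n) with 0 => 0 | n'.+1 => a n' end.
pose b' n : H (Sobj (obj Y) n) (Sobj (obj Z) n) :=
  match n return H (Sobj (obj Y) n) (Sobj (obj Z) n) with 0 => 0 | n'.+1 => b n' end.
exists a', b'; split.
- case=> [|n] /=; last exact: ha.
  by split; apply: zto_eq; exact: zero_ob0.
- case=> [|n] /=; last exact: hb.
  by split; apply: zto_eq; exact: zero_ob0.
- case=> [|n] /=; last exact: hc.
  by apply: conf_zzz; exact: zero_ob0.
Qed.

Lemma seqOK_iter k j X Y Z : seqOK k X Y Z ->
  seqOK (j + k) (iter j (@Sh N) X) (iter j (@Sh N) Y) (iter j (@Sh N) Z).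
Proof. by elim: j => [|j IH] //= h; apply: seqOK_Sh; apply: IH. Qed.

Section F.
Variable K : nat.
Variable A : zmodType.
Variable f : BinComplex N -> A.
Hypothesis hf : K1_additive K f.

Lemma seq_add k X Y Z : (k <= K)%N -> seqOK k X Y Z -> f Y = f X + f Z.
Proof.
move=> hk [hX hY hZ [a [b [ha hb hc]]]].
apply: (proj1 hf X Y Z a b) => //; exact: BinAcyc_mono hk _.
Qed.

Lemma diag0 k X : (k <= K)%N -> BinAcyc k X -> diagonal X -> f X = 0.
Proof. by move=> hk hX; apply: (proj2 hf); exact: BinAcyc_mono hk _. Qed.

End F.
End Cx2.

Lemma p1i1R' (N : ExactCat) A B X (h : Defs.Hom X A) : pr1 A B \oc (in1 A B \oc h) = h :> Defs.Hom (p:=N) X A.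
Proof. exact: p1i1R. Qed.

Ltac simpc1 := rewrite ?compDl ?compDr ?compNl ?compNr ?comp0l ?comp0r -?comp_assoc
  ?p1i1 ?p2i2 ?p1i2 ?p2i1 ?p1i1R ?p2i2R ?p1i2R ?p2i1R ?comp_id_l ?comp_id_r
  ?comp0l ?comp0r ?oppr0 ?addr0 ?add0r ?subr0 ?sub0r ?opprK ?subrr ?addNr ?addKr ?addNKr.
Ltac simpc := do 3 simpc1.

Section Lad.
Variable N : ExactCat.
Local Notation Ob := (Obj N).
Local Notation H := (@Defs.Hom (ecat N)).

Definition ladOK (P Q : nat -> Ob) (d d' : forall n, H (P n.+1) (P n))
  (e e' : forall n, H (Q n.+1) (Q n)) (s t : forall n, H (P n) (Q n)) : Prop :=
  (forall n, is_iso (s n)) /\ (forall n, is_iso (t n)) /\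
      (forall n, s n \oc d n = e n \oc s n.+1) /\ (forall n, t n \oc d' n = e' n \oc t n.+1) /\
      (forall n, e n \oc e n.+1 = 0) /\ (forall n, e' n \oc e' n.+1 = 0).

Lemma acyclic_dd (X : nat -> Ob) (d : forall n, H (X n.+1) (X n)) :
  acyclic d -> forall n, d n \oc d n.+1 = 0.
Proof.
case=> J [e [m [hd hc _]]] n.
rewrite !hd -comp_assoc [e n \oc _]comp_assoc.
by case: (conf_kc (hc n)) => [[-> _] _]; rewrite comp0l comp0r.
Qed.

Lemma Cone_BinAcyc M P Q d d' e e' s t : @ladOK P Q d d' e e' s t ->
  (forall n, (M < n)%N -> is_zero_obj (Q n)) -> (forall n, (M < n.+1)%N -> is_zero_obj (P n)) ->
  BinAcyc M (Cone d d' e e' s t).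
Proof.
case=> hs [ht [hcs [hct [hee hee']]]] hQ hP; split.
- move=> n hn; rewrite /= /Cobj; apply: Bi_zero; first exact: hQ.
  by case: n hn => [|n] hn /=; [exact: zero_ob0 | exact: hP].
- exact: cone_acyclic.
- exact: cone_acyclic.
Qed.

Lemma Cone_seq M P Q d d' e e' s t : @ladOK P Q d d' e e' s t ->
  BinAcyc M (BinC d d') -> BinAcyc M (BinC e e') ->
  seqOK M.+1 (BinC e e') (Cone d d' e e' s t) (Sh (negC (BinC d d'))).
Proof.
move=> hL hP hQ; split.
- exact: BinAcyc_mono hQ.
- apply: Cone_BinAcyc => //.
  + by move=> n hn; case: hQ => hs _ _; apply: hs; exact: ltnW.
  + by move=> n hn; case: hP => hs _ _; apply: hs.
- exact/BinAcyc_Sh/BinAcyc_neg.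
- exists (fun n => in1 (Q n) (Sobj P n)), (fun n => pr2 (Q n) (Sobj P n)); split.
  + by move=> n; rewrite /= /Cd; split; simpc.
  + move=> [|n]; first by split; apply: zto_eq; exact: zero_ob0.
    by rewrite /= /Cd; split; simpc.
  + move=> n; exact: conf12.
Qed.

Definition upP (P : nat -> Ob) := fun n => P n.+1.

Lemma decomp_seq m P Q d d' e e' s t : @ladOK P Q d d' e e' s t ->
  (forall n, (m < n)%N -> is_zero_obj (P n)) -> (forall n, (m < n)%N -> is_zero_obj (Q n)) ->
  seqOK m.+1 (angle (s 0%N) (t 0%N)) (Cone d d' e e' s t)
    (Sh (@Cone N (upP P) (upP Q) (fun n => d n.+1) (fun n => d' n.+1)
          (fun n => e n.+1) (fun n => e' n.+1) (fun n => s n.+1) (fun n => t n.+1))).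
Proof.
move=> hL hP hQ.
have hL' := hL; case: hL' => hs [ht [hcs [hct [hee hee']]]].
have hL1 : ladOK (fun n => d n.+1) (fun n => d' n.+1) (fun n => e n.+1) (fun n => e' n.+1)
   (fun n => s n.+1) (fun n => t n.+1).
  by repeat split => n.
split.
- by apply: BinAcyc_angle.
- apply: Cone_BinAcyc => // n hn; apply: hQ; exact: ltnW.
- apply: BinAcyc_Sh; apply: Cone_BinAcyc => // n hn.
  + by apply: hQ; exact: ltnW.
  + by apply: hP.
pose a n : H (angle_obj (P 0%N) (Q 0%N) n) (Cobj P Q n) :=
  match n return H (angle_obj (P 0%N) (Q 0%N) n) (Cobj P Q n) with
  | 0 => in1 (Q 0%N) (zero_ob N) | 1 => in2 (Q 1%N) (P 0%N) | n'.+2 => 0 end.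
pose b n : H (Cobj P Q n) (Sobj (Cobj (upP P) (upP Q)) n) :=
  match n return H (Cobj P Q n) (Sobj (Cobj (upP P) (upP Q)) n) with
  | 0 => 0 | 1 => in1 (Q 1%N) (zero_ob N) \oc pr1 (Q 1%N) (P 0%N) | n'.+2 => idm _ end.
exists a, b; split.
- move=> [|[|n]]; rewrite /= /Cd; split; by simpc.
- move=> [|[|n]].
  + by split; apply: zto_eq; exact: zero_ob0.
  + rewrite /= /Cd; split; by simpc.
  + by rewrite /=; split; rewrite comp_id_l comp_id_r; reflexivity.
- move=> [|[|n]] /=.
  + rewrite (zto_eq 0 (pr2 (Q 0%N) (zero_ob N))); last exact: zero_ob0.
    exact: conf12.
  + apply: (conf_iso (a:=idm _) (b:=idm _) (c:=in1 (Q 1%N) (zero_ob N)) _ _ _ _ _ (conf21 _ _)).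
    * exact: is_iso_id.
    * exact: is_iso_id.
    * exists (pr1 _ _); split; first exact: p1i1.
      rewrite -bip_id (zto_eq (pr2 _ _) 0); last exact: zero_ob0.
      by rewrite comp0r addr0.
    * by rewrite comp_id_l comp_id_r.
    * by rewrite comp_id_r.
  + apply: conf_zero_iso; [exact: zero_ob0 | exact: is_iso_id].
Qed.

End Lad.

Section Main.
Variable N : ExactCat.
Local Notation Ob := (Obj N).
Local Notation H := (@Defs.Hom (ecat N)).
Local Notation SH := (@Sh N).

Lemma ladOK_up P Q d d' e e' s t : @ladOK N P Q d d' e e' s t ->
  ladOK (fun n => d n.+1) (fun n => d' n.+1) (fun n => e n.+1) (fun n => e' n.+1)
   (fun n => s n.+1) (fun n => t n.+1).
Proof. by case=> hs [ht [hcs [hct [hee hee']]]]; repeat split => n. Qed.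

Lemma iter_zero j (X : BinComplex N) : (forall n, is_zero_obj (obj X n)) ->
  forall n, is_zero_obj (obj (iter j SH X) n).
Proof.
move=> hX; elim: j => [|j IH] //= [|n] /=; [exact: zero_ob0 | exact: IH].
Qed.

Lemma BinAcyc_iter j K (X : BinComplex N) : BinAcyc K X -> BinAcyc (j + K) (iter j SH X).
Proof. by move=> hX; elim: j => [|j IH] //=; rewrite addSn; apply: BinAcyc_Sh. Qed.

Lemma diag_iter j (X : BinComplex N) : diagonal X -> diagonal (iter j SH X).
Proof. by move=> hX; elim: j => [|j IH] //=; apply: diag_Sh. Qed.

Lemma negC_Sh (Y : BinComplex N) : negC (SH Y) = SH (negC Y).
Proof.
rewrite /negC /Sh /=; f_equal; apply: functional_extensionality_dep => -[|n] /=;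
  by rewrite ?oppr0.
Qed.

Lemma negC_angle (P Q : Ob) (a b : H P Q) : negC (angle a b) = angle (- a) (- b).
Proof.
rewrite /negC /angle /=; f_equal; apply: functional_extensionality_dep => -[|n] /=;
  by rewrite ?oppr0.
Qed.

Lemma negC_iter i (P Q : Ob) (a b : H P Q) :
  negC (iter i SH (angle a b)) = iter i SH (angle (- a) (- b)).
Proof. by elim: i => [|i IH] /=; [exact: negC_angle | rewrite negC_Sh IH]. Qed.

Variable k : nat.
Hypothesis hk : (1 <= k)%N.
Variable A : zmodType.
Variable f : BinComplex N -> A.
Hypothesis hf : K1_additive k.+1 f.

Lemma claim m : forall j, (j + m.+1 <= k.+1)%N ->
  forall P Q d d' e e' s t, @ladOK N P Q d d' e e' s t ->
  (forall n, (m < n)%N -> is_zero_obj (P n)) -> (forall n, (m < n)%N -> is_zero_obj (Q n)) ->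
  f (iter j SH (Cone d d' e e' s t)) =
  \sum_(i < m.+1) f (iter (j + i) SH (angle (s i) (t i))).
Proof.
elim: m => [|m IH] j hj P Q d d' e e' s t hL hP hQ.
- have hs := seqOK_iter j (decomp_seq hL hP hQ).
  rewrite (seq_add hf hj hs).
  case: hs => _ _ hZ _.
  rewrite (diag0 hf hj hZ) ?addr0; last first.
    apply: zero_diag; rewrite -iterSr; apply: iter_zero => n /=.
    rewrite /Cobj; apply: Bi_zero; first exact: hQ.
    by case: n => [|n] /=; [exact: zero_ob0 | exact: hP].
  by rewrite big_ord_recl big_ord0 addr0 addn0.
- have hs := seqOK_iter j (decomp_seq hL hP hQ).
  rewrite (seq_add hf hj hs) -iterSr.
  rewrite (IH j.+1 _ (upP P) (upP Q) _ _ _ _ _ _ (ladOK_up hL)); first last.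
  + by move=> n hn; apply: hQ.
  + by move=> n hn; apply: hP.
  + by rewrite addSnnS.
  rewrite [RHS]big_ord_recl addn0; congr (_ + _).
  by apply: eq_bigr => i _; rewrite lift0 addSnnS.
Qed.

Lemma shiftneg' (P : nat -> Ob) (d d' : forall n, H (P n.+1) (P n)) :
  BinAcyc k (BinC d d') -> f (SH (negC (BinC d d'))) = - f (BinC d d').
Proof.
move=> hX.
have hX' := hX; case: hX' => hsup htop hbot.
have hL : ladOK d d' d d' (fun n => idm (P n)) (fun n => idm (P n)).
  split; [move=> n; exact: is_iso_id|].
  split; [move=> n; exact: is_iso_id|].
  split; [by move=> n; rewrite comp_id_l comp_id_r|].
  split; [by move=> n; rewrite comp_id_l comp_id_r|].
  split; [exact: (acyclic_dd htop)|exact: (acyclic_dd hbot)].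
have e1 := seq_add hf (leqnn k.+1) (Cone_seq hL hX hX).
have e2 := claim (j:=0) (leqnn k.+1) hL hsup hsup.
have e3 : f (Cone d d' d d' (fun n => idm (P n)) (fun n => idm (P n))) = 0.
  rewrite /= in e2; rewrite e2; apply: big1 => i _.
  apply: (diag0 hf (k:=i + 1)).
  - by rewrite addn1.
  - by apply: BinAcyc_iter; apply: BinAcyc_angle => //; exact: is_iso_id.
  - by apply: diag_iter.
by apply: (addrI (f (BinC d d'))); rewrite -e1 e3 subrr.
Qed.

Lemma shiftneg (X : BinComplex N) : BinAcyc k X -> f (SH (negC X)) = - f X.
Proof. by case: X => obj d d'; exact: shiftneg'. Qed.

Lemma angle_neg (P Q : Ob) (a b : H P Q) : is_iso a -> is_iso b ->
  f (angle (- a) (- b)) = f (angle a b).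
Proof.
move=> ha hb.
have hs : seqOK 1 (angle a b) (angle (- a) (- b)) (Z0 N).
  split.
  - exact: BinAcyc_angle.
  - by apply: BinAcyc_angle => //; apply: is_isoN.
  - exact: BinAcyc_Z0.
  pose c n : H (angle_obj P Q n) (angle_obj P Q n) :=
    match n return H (angle_obj P Q n) (angle_obj P Q n) with
    | 0 => idm Q | 1 => - idm P | _.+2 => 0 end.
  exists c, (fun n => 0); split.
  - move=> [|[|n]] /=; split; rewrite ?compNl ?compNr ?comp_id_l ?comp_id_r ?opprK ?comp0l ?comp0r ?oppr0 //.
  - by move=> n; split; apply: zto_eq; exact: zero_ob0.
  - move=> [|[|n]] /=; apply: conf_iso_zero; try exact: zero_ob0.
    + exact: is_iso_id.
    + exact/is_isoN/is_iso_id.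
    + by apply: is_iso_zero; exact: zero_ob0.
rewrite (seq_add hf _ hs) // (diag0 hf _ (BinAcyc_Z0 N 1)) ?addr0 //.
Qed.

Lemma angle_shift i : (i <= k)%N -> forall (P Q : Ob) (a b : H P Q), is_iso a -> is_iso b ->
  f (iter i SH (angle a b)) = f (angle a b) *~ ((-1) ^+ i).
Proof.
elim: i => [|i IH] hi P Q a b ha hb; first by rewrite expr0 mulr1z.
have hX : BinAcyc k (iter i SH (angle (- a) (- b))).
  apply: (BinAcyc_mono (k := i + 1)); first by rewrite addn1.
  by apply: BinAcyc_iter; apply: BinAcyc_angle => //; exact: is_isoN.
have := shiftneg hX; rewrite negC_iter !opprK /= => ->.
rewrite (IH (ltnW hi)) ?angle_neg //; try exact: is_isoN.
by rewrite exprS mulN1r mulrNz.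
Qed.

End Main.

Local Close Scope ring_scope.
Unset Implicit Arguments.

Theorem lemma3p3 (N : ExactCat) (k : nat) (hk : (1 <= k)%N) :
  (* the assignment [X] |-> [X] induces a homomorphism L_1^k -> K_1^(k+1):
     every additive invariant of K_1^(k+1) restricts to one of L_1^k *)
  (forall (A : zmodType) (f : BinComplex N -> A),
      K1_additive (k.+1) f -> L1_additive k f) /\
  (* i_k : L_1^k -> L_1^(k+1) (same assignment) is well defined, and it is the
     composite L_1^k -> K_1^(k+1) ->> L_1^(k+1) *)
  (forall (A : zmodType) (f : BinComplex N -> A),
      L1_additive (k.+1) f -> K1_additive (k.+1) f /\ L1_additive k f).
Proof.
have part1 : forall (A : zmodType) (f : BinComplex N -> A),
    K1_additive (k.+1) f -> L1_additive k f.
  move=> A f hf; split.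
  - split.
    + move=> X Y Z a b hX hY hZ ha hb hc; apply: (proj1 hf X Y Z a b) => //;
        exact: BinAcyc_mono (leqnSn k) _.
    + move=> X hX; apply: (proj2 hf); exact: BinAcyc_mono (leqnSn k) hX.
  - move=> P d d' e e' s t hP hQ hcs hct invs invt.
    have isos i : is_iso (s i) by exists (s i); split; apply: invs.
    have isot i : is_iso (t i) by exists (t i); split; apply: invt.
    have hQ' := hQ; case: hQ' => hsQ htQ hbQ.
    have hP' := hP; case: hP' => hsP _ _.
    have hL : ladOK d d' e e' s t.
      split; first exact: isos.
      split; first exact: isot.
      split; first exact: hcs.
      split; first exact: hct.
      split; [exact: (acyclic_dd htQ) | exact: (acyclic_dd hbQ)].
    have e1 := seq_add hf (leqnn k.+1) (Cone_seq hL hP hQ).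
    rewrite (shiftneg hf hP) in e1.
    have e2 := claim hf (j:=0) (leqnn k.+1) hL hsP hsQ.
    rewrite /= in e2.
    rewrite -e1 e2; apply: eq_bigr => i _.
    by rewrite add0n (angle_shift hf (ltn_ord i)).
split; first exact: part1.
move=> A f [hK hL]; split => //; exact: part1.
Qed.
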